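(* Let $W\in\mathbb{R}^{d\times d}$ be symmetric positive definite, $b\in\mathbb{R}^d$, $c\in\mathbb{R}$, and consider $\min_{x\in\mathbb{R}^d} f(x)=\frac12 x^TWx-b^Tx+c$, with unique solution $x^\star=W^{-1}b$. Let $W=Q\Lambda Q^T$ be an eigendecomposition with $Q$ orthogonal and $\Lambda$ diagonal. Consider an optimization method of the form $$x_{k+1}-x^\star = Q A Q^T (x_k-x^\star) + Q B Q^T (x_{k-1}-x^\star),\qquad k\ge 1,$$ started from arbitrary $x_0,x_1\in\mathbb{R}^d$, where $A=\mathrm{diag}(a_1,\dots,a_d)$ and $B=\mathrm{diag}(b_1,\dots,b_d)$ are real diagonal matrices (equivalently, in the coordinates $\hat x_k=Q^T(x_k-x^\star)$ the method reads $\hat x_{k+1}=A\hat x_k+B\hat x_{k-1}$, i.e. $z_{k+1}=Mz_k$ with $M=\begin{bmatrix}A & B\\ I & 0\end{bmatrix}$, $z_k=(\hat x_k,\hat x_{k-1})$). Assume the method converges to $x^\star$, and that for each $i\in\{1,\dots,d\}$ the two eigenvalues $\lambda_1^{M_i},\lambda_2^{M_i}$ of the $2\times 2$ matrix $M_i=\begin{bmatrix} a_i & b_i\\ 1 & 0\end{bmatrix}$ form a conjugate pair, i.e. $(\lambda_1^{M_i})^*=\lambda_2^{M_i}$. Then $$V(x_k,x_{k-1},x_{k-2})=\|x_{k-1}-x^\star\|^2-\langle x_k-x^\star,\,x_{k-2}-x^\star\rangle$$ is a Lyapunov function for this method.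
   Context: The method is said to converge to $x^\star$ if $x_k\to x^\star$ for every choice of initial points $x_0,x_1$. A function $V(x_k,x_{k-1},x_{k-2})$ is called a Lyapunov function for the method if, along every trajectory of the method, $V(x_k,x_{k-1},x_{k-2})\ge 0$ for all $k\ge 2$ and $V(x_{k+1},x_k,x_{k-1})\le V(x_k,x_{k-1},x_{k-2})$ for all $k\ge 2$. ''Conjugate pair'' means the two eigenvalues are complex conjugates of each other (this includes the case of two equal real eigenvalues). Here $\|\cdot\|$ and $\langle\cdot,\cdot\rangle$ are the Euclidean norm and inner product. *)

(* Defs.v *)
From mathcomp Require Import all_boot all_order all_algebra.
From mathcomp Require Import all_classical all_reals all_analysis.
From mathcomp Require Import complex.
Import Order.TTheory GRing.Theory Num.Theory.
Import numFieldTopology.Exports numFieldNormedType.Exports.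

Set Implicit Arguments.
Unset Strict Implicit.
Unset Printing Implicit Defensive.

Local Open Scope classical_set_scope.
Local Open Scope ring_scope.

Definition inner (R : realType) (d : nat) (u v : 'cV[R]_d) : R :=
  \sum_(i < d) u i 0 * v i 0.
Definition norm2 (R : realType) (d : nat) (u : 'cV[R]_d) : R := inner u u.

Definition spd (R : realType) (d : nat) (W : 'M[R]_d) : Prop :=
  W^T = W /\ forall v : 'cV[R]_d, v != 0 -> 0 < inner v (W *m v).

Definition orthogonal_mx (R : realType) (d : nat) (Q : 'M[R]_d) : Prop :=
  Q^T *m Q = 1%:M.

Definition M2 (R : realType) (ai bi : R) : 'M[R]_2 :=
  \matrix_(i < 2, j < 2)
    (if i == 0 then (if j == 0 then ai else bi) else (if j == 0 then 1 else 0)).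

Definition eigenvalues2 (R : realType) (M : 'M[R]_2) (l1 l2 : R[i]) : Prop :=
  char_poly (map_mx (fun r : R => (r%:C)%C) M) = ('X - l1%:P) * ('X - l2%:P).

Definition eig_conjugate_pair (R : realType) (M : 'M[R]_2) : Prop :=
  exists l1 l2 : R[i], eigenvalues2 M l1 l2 /\ (l1^*)%C = l2.

Definition trajectory (R : realType) (d : nat) (Q : 'M[R]_d) (a bb : 'rV[R]_d)
    (xs : 'cV[R]_d) (x : nat -> 'cV[R]_d) : Prop :=
  forall k : nat, (1 <= k)%N ->
    x k.+1 - xs = Q *m diag_mx a *m Q^T *m (x k - xs)
                  + Q *m diag_mx bb *m Q^T *m (x k.-1 - xs).

Definition method_converges (R : realType) (d : nat) (Q : 'M[R]_d)
    (a bb : 'rV[R]_d) (xs : 'cV[R]_d) : Prop :=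
  forall x : nat -> 'cV[R]_d, trajectory Q a bb xs x ->
    x k @[k --> \oo] --> xs.

Definition is_lyapunov (R : realType) (d : nat) (Q : 'M[R]_d)
    (a bb : 'rV[R]_d) (xs : 'cV[R]_d)
    (V : 'cV[R]_d -> 'cV[R]_d -> 'cV[R]_d -> R) : Prop :=
  forall x : nat -> 'cV[R]_d, trajectory Q a bb xs x ->
    (forall k : nat, (2 <= k)%N -> 0 <= V (x k) (x k.-1) (x k.-2)) /\
    (forall k : nat, (2 <= k)%N ->
       V (x k.+1) (x k) (x k.-1) <= V (x k) (x k.-1) (x k.-2)).

Definition Vfun (R : realType) (d : nat) (xs : 'cV[R]_d)
    (u v w : 'cV[R]_d) : R :=
  norm2 (v - xs) - inner (u - xs) (w - xs).

Definition fobj (R : realType) (d : nat) (W : 'M[R]_d) (b : 'cV[R]_d) (c : R)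
    (x : 'cV[R]_d) : R :=
  2^-1 * inner x (W *m x) - inner b x + c.

(* Main.v *)
Require Import Defs.
From mathcomp Require Import all_boot all_order all_algebra.
From mathcomp Require Import all_classical all_reals all_analysis.
From mathcomp Require Import complex.
From mathcomp Require Import ring lra.
Import Order.TTheory GRing.Theory Num.Theory.
Import numFieldTopology.Exports numFieldNormedType.Exports.
Local Open Scope ring_scope.
Lemma conj_disc (R : realType) (a b : R) :
  eig_conjugate_pair (M2 a b) -> a ^+ 2 + 4 * b <= 0.
Proof.
case=> l1 [l2 [E C]].
pose N := map_mx (fun r : R => (r%:C)%C) (M2 a b); rewrite -/N in E.
have h1 := char_poly_trace N (isT : (0 < 2)%N).
have h0 := char_poly_det N.
rewrite E in h1 h0.
have tr : \tr N = (a%:C)%C.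
  by rewrite /mxtrace !big_ord_recl big_ord0 /N !mxE /= rmorph0 !addr0.
have dt : \det N = - (b%:C)%C.
  rewrite (expand_det_row _ 0) !big_ord_recl big_ord0 /cofactor.
  by rewrite !det_mx11 /N !mxE /= rmorph0 rmorph1 !mulr0 add0r addr0 expr1 mulr1 mulrN1.
rewrite tr in h1; rewrite dt in h0.
move: h1 h0.
rewrite !coefM !big_ord_recl big_ord0 /= !coefB !coefX !coefC /=.
rewrite -C; case: l1 {E C l2} => x y /=.
rewrite big_ord0 !subr0 !sub0r !mulr1 !mul1r !addr0 mulrNN sqrrN expr1n mul1r.
move=> /eqP h1 /eqP h0; move: h1 h0.
rewrite !eq_complex /= => /andP[/eqP e1 _] /andP[/eqP e2 _].
have -> : a = x + x by lra.
have -> : b = - (x * x + y * y) by lra.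
nra.
Qed.

Lemma entry_le (R : realType) m n (M : 'M[R]_(m, n)) i j : `|M i j| <= `|M|.
Proof.
rewrite [X in _ <= X]/Num.norm /= mx_normrE.
exact: (le_bigmax _ _ (i, j)).
Qed.

Lemma innerE (R : realType) d (u v : 'cV[R]_d) : inner u v = (u^T *m v) 0 0.
Proof. by rewrite /inner mxE; apply: eq_bigr => i _; rewrite mxE. Qed.

Lemma inner_Q (R : realType) d (Q : 'M[R]_d) (u v : 'cV[R]_d) :
  Q^T *m Q = 1%:M -> inner (Q *m u) (Q *m v) = inner u v.
Proof.
move=> QQ; rewrite !innerE trmx_mul -mulmxA (mulmxA Q^T) QQ mul1mx //.
Qed.

Lemma diag_delta (R : realType) d (a : 'rV[R]_d) (i : 'I_d) :
  diag_mx a *m delta_mx i (0 : 'I_1) = a 0 i *: delta_mx i 0.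
Proof.
apply/matrixP => r c; rewrite mul_diag_mx !mxE.
by case: eqP => [->|_]; rewrite ?mulr0 ?mulr1.
Qed.

Lemma step_Q (R : realType) d (Q : 'M[R]_d) (a : 'rV[R]_d) (v : 'cV[R]_d) :
  Q^T *m Q = 1%:M -> Q^T *m (Q *m diag_mx a *m Q^T *m v) = diag_mx a *m (Q^T *m v).
Proof.
move=> QQ; rewrite !mulmxA QQ mul1mx -!mulmxA //.
Qed.

Section Seq.
Variables (R : realType) (a b : R).
Fixpoint sp (n : nat) : R * R :=
  match n with 0 => (0, 1) | n'.+1 => let p := sp n' in (p.2, a * p.2 + b * p.1) end.
Definition sq n := (sp n).1.
Lemma sq0 : sq 0 = 0. Proof. by []. Qed.
Lemma sq1 : sq 1 = 1. Proof. by []. Qed.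
Lemma sqS n : sq n.+2 = a * sq n.+1 + b * sq n. Proof. by []. Qed.
End Seq.
Arguments sq {R}.
Arguments sqS {R}.
Arguments sq0 {R}.
Arguments sq1 {R}.

Lemma b_ge (R : realType) d (Q : 'M[R]_d) (a bb : 'rV[R]_d) (xs : 'cV[R]_d) :
  Q^T *m Q = 1%:M -> method_converges Q a bb xs -> forall i, -1 <= bb 0 i.
Proof.
move=> QQ hc i; rewrite leNgt; apply/negP => hb.
set s := sq (a 0 i) (bb 0 i).
pose e : 'cV[R]_d := delta_mx i 0.
pose x := fun k => xs + s k *: (Q *m e).
have xE k : x k - xs = s k *: (Q *m e) by rewrite /x addrAC subrr add0r.
have htr : trajectory Q a bb xs x.
  move=> [|k] // _; rewrite !xE /=.
  rewrite -!mulmxA -!scalemxAr !(mulmxA Q^T) QQ !mul1mx !diag_delta -!scalemxAr.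
  rewrite !scalerA -scalerDl /s sqS; congr (_ *: _); ring.
have cv := hc x htr.
have Qe0 : Q *m e != 0.
  apply/negP => /eqP h.
  have : Q^T *m (Q *m e) = e by rewrite mulmxA QQ mul1mx.
  rewrite h mulmx0 => /matrixP /(_ i 0); rewrite /e !mxE !eqxx /=.
  by move/eqP; rewrite eq_sym oner_eq0.
have [j hj] : exists j, (Q *m e) j 0 != 0.
  case/boolP: [exists j, (Q *m e) j 0 != 0] => [/existsP//|].
  rewrite negb_exists => /forallP h; case/negP: Qe0.
  apply/eqP/matrixP => r c; rewrite (ord1 c) [RHS]mxE; apply/eqP.
  by move: (h r); rewrite negbK.
set v := (Q *m e) j 0 in hj.
have vpos : 0 < `|v| by rewrite normr_gt0.
move/cvgrPdist_lt: cv => /(_ (`|v| / 2)).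
have : 0 < `|v| / 2 by rewrite divr_gt0.
move=> h /(_ h) [N _ HN].
have sbound k : (N <= k)%N -> `|s k| < 1 / 2.
  move=> /HN /= hk.
  have : `|s k| * `|v| < `|v| / 2.
    apply: le_lt_trans hk.
    rewrite -opprB xE normrN -normrM.
    have := @entry_le R _ _ (s k *: (Q *m e)) j 0.
    by rewrite mxE.
  rewrite mulrC -subr_gt0 => hh.
  rewrite -subr_gt0.
  have : 0 < `|v| * (1 / 2 - `|s k|) by rewrite mulrBr; lra.
  by rewrite pmulr_rgt0.
pose w k := s k.+1 ^+ 2 - s k.+2 * s k.
have wS k : w k.+1 = - bb 0 i * w k.
  rewrite /w /s !sqS; ring.
have w1 k : 1 <= w k.
  elim: k => [|k IH]; first by rewrite /w /s sqS sq0 sq1; lra.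
  rewrite wS; nra.
have := w1 N; rewrite /w.
have h0 := sbound N (leqnn N).
have h1 := sbound N.+1 (leqnSn N).
have h2 := sbound N.+2 (leq_trans (leqnSn N) (leqnSn _)).
move: h0 h1 h2; rewrite !ltr_norml => /andP[h0 h0'] /andP[h1 h1'] /andP[h2 h2'].
nra.
Qed.

Theorem theorem2 (R : realType) (d : nat) (W : 'M[R]_d) (b : 'cV[R]_d) (c : R)
    (Q Lam : 'M[R]_d) (a bb : 'rV[R]_d) :
  spd W ->
  orthogonal_mx Q -> is_diag_mx Lam -> W = Q *m Lam *m Q^T ->
  let xs := invmx W *m b in
  method_converges Q a bb xs ->
  (forall i : 'I_d, eig_conjugate_pair (M2 (a 0 i) (bb 0 i))) ->
  is_lyapunov Q a bb xs (Vfun xs).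
Proof.
move=> _ QQ _ _ xs hc hconj.
have QQ' : Q *m Q^T = 1%:M by apply: mulmx1C.
have hb := @b_ge R d Q a bb xs QQ hc.
have {}QQ : Q^T *m Q = 1%:M := QQ.
have hd i := @conj_disc R _ _ (hconj i).
move=> x htr.
pose y k := Q^T *m (x k - xs).
have yE k : x k - xs = Q *m y k by rewrite /y mulmxA QQ' mul1mx.
have rec n i : y n.+2 i 0 = a 0 i * y n.+1 i 0 + bb 0 i * y n i 0.
  rewrite /y (htr n.+1 isT) mulmxDr !step_Q //.
  by rewrite [LHS]mxE !mul_diag_mx !mxE.
pose T k j := y k.+1 j 0 ^+ 2 - y k.+2 j 0 * y k j 0.
have VE m : Vfun xs (x m.+2) (x m.+1) (x m) = \sum_i T m i.
  rewrite /Vfun /norm2.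
rewrite !yE !(@inner_Q R d Q _ _ QQ) /inner -sumrB.
  by apply: eq_bigr => i _; rewrite /T expr2.
have T0 m i : 0 <= T m i.
  rewrite /T rec; have := hd i.
  set p := y m.+1 i 0; set q := y m i 0; set aa := a 0 i; set b' := bb 0 i => h.
  have h1 : 0 <= (2 * p - aa * q) ^+ 2 by apply: sqr_ge0.
  have h2 : 0 <= - (aa ^+ 2 + 4 * b') * q ^+ 2.
    by apply: mulr_ge0; [rewrite oppr_ge0 | apply: sqr_ge0].
  nra.
have TS m i : T m.+1 i = - bb 0 i * T m i.
  rewrite /T !rec; ring.
split => -[|[|m]] // _ /=.
  by rewrite VE; apply: sumr_ge0 => i _.
rewrite !VE; apply: ler_sum => i _; rewrite TS.
have := T0 m i; have := hb i; nra.
Qed.
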